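(* Let $T$ be a finite tree with $m$ edges, let $u \in V(T)$, $n \in \mathbf{N}$, and $i \in \{1,\ldots,n\}$. Then \[ \sum_{\substack{F \in I(T,n)\\ F(u)=i}} P(T,F) \le C^m . \]
   Context: For each $n \in \mathbf{N}$, $W_n = (w_{ij}^{(n)})_{i,j=1}^n$ is a random $n \times n$ Hermitian matrix whose upper triangular entries (diagonal included) are jointly independent, have mean zero and finite variances. It is assumed that there is a finite constant $C \ge 0$ such that \[ \sum_{j=1}^n \operatorname{Var}\bigl[w_{ij}^{(n)}\bigr] \le C \qquad \text{for all } n = 1,2,\ldots \text{ and } i = 1,\ldots,n. \] Graphs are undirected, may have loops, but have no multiple edges. For a finite graph $G$ and $n \in \mathbf{N}$, $I(G,n)$ denotes the set of all injections from $V(G)$ into $\{1,\ldots,n\}$. For $F \in I(G,n)$, \[ P(G,F) := \prod_{e \in E(G)} \operatorname{Var}\bigl[w_{F(u_e)F(v_e)}^{(n)}\bigr], \] where $u_e, v_e$ are the ends of the edge $e$ (well-defined since $W_n$ is Hermitian); an empty product equals $1$. *)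

(* Defs.v *)
From HB Require Import structures.
From mathcomp Require Import all_boot all_order all_algebra.
Set Implicit Arguments. Unset Strict Implicit. Unset Printing Implicit Defensive.
Import Order.TTheory GRing.Theory Num.Theory.
Local Open Scope ring_scope.

(* A finite graph is given by a finite vertex type V, a finite edge type E,
   and the map [ends : E -> V * V] giving the two ends (u_e, v_e) of each edge. *)

Definition no_multi_edges (V E : finType) (ends : E -> V * V) : Prop :=
  forall e f : E,
    (ends e == ends f) || (ends e == ((ends f).2, (ends f).1)) -> e = f.

Definition loopless (V E : finType) (ends : E -> V * V) : Prop :=
  forall e : E, (ends e).1 != (ends e).2.

Definition adj (V E : finType) (ends : E -> V * V) : rel V :=
  fun x y => [exists e : E, (ends e == (x, y)) || (ends e == (y, x))].

Definition connected_graph (V E : finType) (ends : E -> V * V) : Prop :=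
  forall x y : V, connect (adj ends) x y.

Definition acyclic_graph (V E : finType) (ends : E -> V * V) : Prop :=
  forall s : seq V, (3 <= size s)%N -> uniq s -> ~~ cycle (adj ends) s.

Definition is_tree (V E : finType) (ends : E -> V * V) : Prop :=
  [/\ loopless ends, no_multi_edges ends, connected_graph ends & acyclic_graph ends].

(* P(G,F) = prod_{e in E(G)} Var[w_{F(u_e) F(v_e)}], with the variance profile
   [var n i j] = Var[w^{(n)}_{ij}] (indices 0-based: 'I_n = {0,...,n-1}). *)
Definition Pweight (R : nzRingType) (var : forall n : nat, 'I_n -> 'I_n -> R)
  (V E : finType) (ends : E -> V * V) (n : nat) (F : {ffun V -> 'I_n}) : R :=
  \prod_(e : E) var n (F (ends e).1) (F (ends e).2).

(* Main.v *)
Require Import Defs.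
From HB Require Import structures.
From mathcomp Require Import all_boot all_order all_algebra.
Import Order.TTheory GRing.Theory Num.Theory.
Local Open Scope ring_scope.
Set Implicit Arguments. Unset Strict Implicit. Unset Printing Implicit Defensive.

Inductive good (V E : finType) (ends : E -> V * V) (u : V) : seq V -> {set E} -> Prop :=
| good_nil : good ends u [::] set0
| good_step s D w p e : good ends u s D -> w \notin u :: s -> p \in u :: s ->
    (ends e == (p, w)) || (ends e == (w, p)) -> good ends u (rcons s w) (e |: D).

Lemma good_ends (V E : finType) (ends : E -> V * V) (u : V) s D :
  good ends u s D -> forall e, e \in D -> ((ends e).1 \in u :: s) && ((ends e).2 \in u :: s).
Proof.
elim=> [|s' D' w p e _ IH wn pin he] f; first by rewrite inE.
have sub : forall x, x \in u :: s' -> x \in u :: rcons s' w.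
  by move=> x; rewrite -rcons_cons mem_rcons inE => ->; rewrite orbT.
have win : w \in u :: rcons s' w by rewrite -rcons_cons mem_rcons inE eqxx.
rewrite in_setU1 => /orP [/eqP -> | /IH /andP [h1 h2]]; last by rewrite (sub _ h1) (sub _ h2).
by case/orP: he => /eqP -> /=; rewrite win (sub _ pin).
Qed.

Lemma good_uniq (V E : finType) (ends : E -> V * V) (u : V) s D :
  good ends u s D -> uniq (u :: s).
Proof.
elim=> [//|s' D' w p e _ IH wn pin he].
by rewrite -rcons_cons rcons_uniq wn IH.
Qed.

Lemma good_card (V E : finType) (ends : E -> V * V) (u : V) s D :
  good ends u s D -> #|D| = size s.
Proof.
move=> G; elim: G => [|s' D' w p e G IH wn pin he]; first by rewrite cards0.
rewrite size_rcons cardsU1 IH.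
case eD: (e \in D') => //.
move: (good_ends G eD) => /andP [h1 h2].
by case/orP: he => /eqP he; rewrite he /= in h1 h2; rewrite ?h1 ?h2 in wn.
Qed.

Definition upd (V : finType) n (g : {ffun V -> 'I_n}) (w : V) (j : 'I_n) : {ffun V -> 'I_n} :=
  [ffun x => if x == w then j else g x].
Definition supp (V : finType) n (u : V) (i : 'I_n) (s : seq V) (g : {ffun V -> 'I_n}) : bool :=
  (g u == i) && [forall x, (x \notin u :: s) ==> (g x == i)].

Lemma sum_good (R : realFieldType) (C : R)
  (var : forall n : nat, 'I_n -> 'I_n -> R)
  (hC : 0 <= C)
  (var_ge0 : forall (n : nat) (i j : 'I_n), 0 <= var n i j)
  (var_sym : forall (n : nat) (i j : 'I_n), var n i j = var n j i)
  (var_row : forall (n : nat) (i : 'I_n), \sum_(j < n) var n i j <= C)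
  (V E : finType) (ends : E -> V * V) (u : V) (n : nat) (i : 'I_n) s D :
  good ends u s D ->
  \sum_(g | supp u i s g) \prod_(e in D) var n (g (ends e).1) (g (ends e).2) <= C ^+ #|D|.
Proof.
move=> G; elim: s D / G => [|s D w p e G IH wn pin he].
  rewrite (big_pred1 [ffun=> i]) ?big_set0 ?cards0 ?expr0 //.
  move=> g /=; rewrite /supp; apply/idP/eqP.
    by case/andP=> /eqP gu /forallP h; apply/ffunP=> x; rewrite ffunE;
      case: (eqVneq x u) => [->//|xu]; apply/eqP; move: (h x); rewrite !inE xu.
  by move=> ->; rewrite ffunE eqxx /=; apply/forallP=> x; rewrite ffunE eqxx implybT.
have eD : e \notin D.
  apply/negP=> eD; move: (good_ends G eD) => /andP [h1 h2].
  by case/orP: he => /eqP he; rewrite he /= in h1 h2; rewrite ?h1 ?h2 in wn.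
have wu : w != u by move: wn; rewrite inE negb_or => /andP [].
have wns : w \notin s by move: wn; rewrite inE negb_or => /andP [].
have pw : p != w by apply/eqP=> pw; rewrite -pw pin in wn.
rewrite cardsU1 eD add1n exprS.
have uw : u != w by rewrite eq_sym.
have memr : forall x, (x \in u :: rcons s w) = (x == w) || (x \in u :: s).
  by move=> x; rewrite -rcons_cons mem_rcons inE.
rewrite (partition_big (fun g => upd g w i) (supp u i s)); last first.
  move=> g /andP [gu /forallP h]; rewrite /supp ffunE (negbTE uw) gu /=.
  apply/forallP=> x; rewrite ffunE; case: (x =P w) => [_|/eqP xw]; first by rewrite eqxx implybT.
  apply/implyP=> xn; by move: (h x); rewrite memr (negbTE xw) xn.
apply: (le_trans _ (ler_wpM2l hC IH)); rewrite mulr_sumr; apply: ler_sum => g' /andP [g'u /forallP hg'].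
have g'w : g' w = i by apply/eqP; move: (hg' w); rewrite wn.
rewrite (reindex_onto (fun j => upd g' w j) (fun g => g w)); last first.
  move=> g /andP [_ /eqP <-]; apply/ffunP=> x; rewrite !ffunE; case: eqP => [->|] //.
rewrite (eq_bigl xpredT); last first.
  move=> j /=; rewrite /supp !ffunE (negbTE uw) g'u !eqxx /= ?andbT.
  apply/andP; split.
    apply/forallP=> x; rewrite ffunE memr; case: (x =P w) => //= _; exact: hg'.
  apply/eqP/ffunP=> x; rewrite !ffunE; case: (x =P w) => [->|] //.
have hD : forall j, \prod_(f in D) var n (upd g' w j (ends f).1) (upd g' w j (ends f).2)
   = \prod_(f in D) var n (g' (ends f).1) (g' (ends f).2).
  move=> j; apply: eq_bigr => f fD; move: (good_ends G fD) => /andP [h1 h2].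
  rewrite !ffunE; case: eqP => [e1|_]; first by rewrite -e1 h1 in wn.
  case: eqP => [e2|_] //; by rewrite -e2 h2 in wn.
have he' : forall j, var n (upd g' w j (ends e).1) (upd g' w j (ends e).2) = var n (g' p) j.
  move=> j; case/orP: he => /eqP -> /=; rewrite !ffunE eqxx (negbTE pw) // var_sym.
under eq_bigr => j _ do rewrite big_setU1 //= hD he'.
rewrite -mulr_suml; apply: ler_wpM2r; last exact: var_row.
by apply: prodr_ge0 => f _; apply: var_ge0.
Qed.

Lemma crossing (V : finType) (r : rel V) (S : pred V) a p :
  S a -> path r a p -> ~~ S (last a p) -> exists a' b', [/\ S a', ~~ S b' & r a' b'].
Proof.
elim: p a => [|b p IH] a Sa /=; first by rewrite Sa.
case/andP=> rab pb lb.
case Sb: (S b); first exact: IH Sb pb lb.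
by exists a, b; rewrite Sb Sa rab.
Qed.

Lemma exists_good (V E : finType) (ends : E -> V * V) (u : V) :
  connected_graph ends -> exists s D, good ends u s D /\ forall x, x \in u :: s.
Proof.
move=> conn.
have H : forall k, exists s D, good ends u s D /\ ((k <= size s)%N \/ forall x, x \in u :: s).
  elim=> [|k [s [D [G H]]]]; first by exists [::], set0; split; [exact: good_nil | left].
  case: (boolP [forall x, x \in u :: s]) => [/forallP all|].
    by exists s, D; split => //; right.
  rewrite negb_forall => /existsP [x xn].
  case: H => [ks|all]; last by rewrite all in xn.
  have cx : connect (adj ends) u x by exact: conn.
  case/connectP: cx => p pp xl.
  have := @crossing V (adj ends) (mem (u :: s)) u p (mem_head _ _) pp.
  rewrite -xl => /(_ xn) [a [b [aS bS /existsP [e he]]]].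
  exists (rcons s b), (e |: D); split; last by left; rewrite size_rcons.
  exact: (good_step G bS aS he).
have [s [D [G [ks|all]]]] := H #|V|; last by exists s, D.
have U := good_uniq G.
have := max_card (mem (u :: s)); rewrite (card_uniqP U) /=.
by move=> h; have := leq_trans h ks; rewrite ltnn.
Qed.

Theorem lemma3p1 (R : realFieldType) (C : R)
  (var : forall n : nat, 'I_n -> 'I_n -> R)
  (hC : 0 <= C)
  (var_ge0 : forall (n : nat) (i j : 'I_n), 0 <= var n i j)
  (var_sym : forall (n : nat) (i j : 'I_n), var n i j = var n j i)
  (var_row : forall (n : nat) (i : 'I_n), \sum_(j < n) var n i j <= C)
  (V E : finType) (ends : E -> V * V) (hT : is_tree ends)
  (u : V) (n : nat) (i : 'I_n) :
  \sum_(F : {ffun V -> 'I_n} | injectiveb F && (F u == i)) Pweight var ends F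
    <= C ^+ #|E|.
Proof.
case: hT => _ _ conn _.
have [s [D [G cov]]] := exists_good u conn.
have var_le : forall a b : 'I_n, var n a b <= C.
  move=> a b; apply: le_trans (var_row n a).
  rewrite (bigD1 b) //= lerDl; apply: sumr_ge0 => k _; exact: var_ge0.
have W0 : forall F : {ffun V -> 'I_n}, 0 <= Pweight var ends F.
  by move=> F; apply: prodr_ge0 => e _; exact: var_ge0.
apply: (@le_trans _ _ (\sum_(F : {ffun V -> 'I_n} | supp u i s F) Pweight var ends F)).
  rewrite [X in _ <= X]big_mkcond [X in X <= _]big_mkcond /=; apply: ler_sum => F _.
  rewrite /supp; case: (F u == i); rewrite ?andbT ?andbF //=.
  have -> : [forall x, (x \notin u :: s) ==> (F x == i)].
    by apply/forallP => x; rewrite cov.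
  by case: injectiveb.
apply: (@le_trans _ _ (\sum_(F : {ffun V -> 'I_n} | supp u i s F)
   C ^+ #|~: D| * \prod_(e in D) var n (F (ends e).1) (F (ends e).2))).
  apply: ler_sum => F _; rewrite /Pweight (bigID (fun e => e \in D)) /= mulrC.
  apply: ler_wpM2r; first by apply: prodr_ge0 => e _; exact: var_ge0.
  rewrite -prodr_const (eq_bigl (fun e => e \in ~: D)); last by move=> e; rewrite in_setC.
  by apply: ler_prod => e eD; rewrite var_ge0 var_le.
rewrite -mulr_sumr -(cardsC D) exprD mulrC; apply: ler_wpM2r.
  exact: exprn_ge0.
exact: (sum_good hC var_ge0 var_sym var_row).
Qed.
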